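(* Let $\Sigma=(X,\mathcal{S},\phi)$ be a forward complete dynamical system. Let $t_1>0$, $G_0>0$, and let $\beta$ be a function of class $\mathcal{K}_\infty$ such that $\limsup_{r\downarrow 0}\frac{\beta(r)}{r}<+\infty$ and $$\|\phi(t,x,\sigma)\|\le G_0\,\beta(\|x\|)\quad \text{for all } t\in[0,t_1],\ x\in X,\ \sigma\in\mathcal{S}.$$ Then the following statements are equivalent: (i) $\Sigma$ is ULES; (ii) for every $p>0$ there exist a nondecreasing function $k:\mathbb{R}_+\to\mathbb{R}_+$ and $R>0$ such that $$\int_0^{+\infty}\|\phi(t,x,\sigma)\|^p\,dt\le k(\|x\|)^p\|x\|^p\quad\text{for all } x\in B_X(0,R),\ \sigma\in\mathcal{S};$$ (iii) there exist $p>0$, a nondecreasing function $k:\mathbb{R}_+\to\mathbb{R}_+$, and $R>0$ such that the inequality in (ii) holds for all $x\in B_X(0,R)$ and $\sigma\in\mathcal{S}$.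
   Context: $(X,\|\cdot\|)$ is a Banach space and $B_X(x,r)$ denotes the closed ball of center $x$ and radius $r$. A function $\alpha:\mathbb{R}_+\to\mathbb{R}_+$ is of class $\mathcal{K}$ if it is continuous, increasing and $\alpha(0)=0$; of class $\mathcal{K}_\infty$ if moreover unbounded. Let $\mathcal{Q}$ be a nonempty set and $\mathcal{S}$ a set of functions $\sigma:\mathbb{R}_+\to\mathcal{Q}$ which is closed by time-shift (for $\sigma\in\mathcal{S}$, $\tau\ge0$, the function $\mathbb{T}_\tau\sigma:s\mapsto\sigma(\tau+s)$ is in $\mathcal{S}$) and closed by concatenation (for $\sigma_1,\sigma_2\in\mathcal{S}$, $\tau>0$, the function equal to $\sigma_1$ on $[0,\tau]$ and with $\sigma(\tau+t)=\sigma_2(t)$ for $t>0$ is in $\mathcal{S}$). A triple $\Sigma=(X,\mathcal{S},\phi)$ with $\phi:\mathbb{R}_+\times X\times\mathcal{S}\to X$ is a forward complete dynamical system if: (i) $\phi(0,x,\sigma)=x$; (ii) if $\tilde\sigma=\sigma$ on $[0,t]$ then $\phi(t,x,\tilde\sigma)=\phi(t,x,\sigma)$; (iii) $t\mapsto\phi(t,x,\sigma)$ is continuous; (iv) $\phi(\tau,\phi(t,x,\sigma),\mathbb{T}_t\sigma)=\phi(t+\tau,x,\sigma)$ for all $t,\tau\ge0$, $x\in X$, $\sigma\in\mathcal{S}$. $\Sigma$ is uniformly locally exponentially stable at the origin (ULES) if there exist $R,M,\lambda>0$ such that $\|\phi(t,x,\sigma)\|\le Me^{-\lambda t}\|x\|$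 for all $t\ge0$, $x\in B_X(0,R)$, $\sigma\in\mathcal{S}$. *)

(* Defs.v *)
From HB Require Import structures.
From mathcomp Require Import all_boot all_order all_algebra.
From mathcomp Require Import all_classical all_reals all_analysis.
Set Implicit Arguments. Unset Strict Implicit. Unset Printing Implicit Defensive.
Import Order.TTheory GRing.Theory Num.Theory.
Import numFieldNormedType.Exports.
Local Open Scope classical_set_scope.
Local Open Scope ring_scope.

(* Signals sigma : R_+ -> Q are modelled as functions R -> Q whose values at
   negative times are irrelevant. *)

Definition tshift (R : realType) (Q : Type) (tau : R) (sigma : R -> Q) : R -> Q :=
  fun s => sigma (tau + s).

Definition concat (R : realType) (Q : Type) (sigma1 sigma2 : R -> Q) (tau : R)
  : R -> Q := fun t => if t <= tau then sigma1 t else sigma2 (t - tau).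

Definition shift_closed (R : realType) (Q : Type) (S : set (R -> Q)) : Prop :=
  forall sigma tau, S sigma -> 0 <= tau -> S (tshift tau sigma).

Definition concat_closed (R : realType) (Q : Type) (S : set (R -> Q)) : Prop :=
  forall sigma1 sigma2 tau, S sigma1 -> S sigma2 -> 0 < tau ->
    exists2 s', S s' & forall t, 0 <= t -> s' t = concat sigma1 sigma2 tau t.

Definition fc_dynamical_system (R : realType) (X : normedModType R) (Q : Type)
  (S : set (R -> Q)) (phi : R -> X -> (R -> Q) -> X) : Prop :=
  [/\ forall x sigma, S sigma -> phi 0 x sigma = x,
      forall t x sigma sigma', 0 <= t -> S sigma -> S sigma' ->
        (forall s, 0 <= s <= t -> sigma' s = sigma s) ->
        phi t x sigma' = phi t x sigma,
      forall x sigma, S sigma ->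
        {within `[0, +oo[, continuous (fun t => phi t x sigma)} &
      forall t tau x sigma, 0 <= t -> 0 <= tau -> S sigma ->
        phi tau (phi t x sigma) (tshift t sigma) = phi (t + tau) x sigma].

Definition ULES (R : realType) (X : normedModType R) (Q : Type)
  (S : set (R -> Q)) (phi : R -> X -> (R -> Q) -> X) : Prop :=
  exists Rad M lam : R, [/\ 0 < Rad, 0 < M, 0 < lam &
    forall t x sigma, 0 <= t -> `|x| <= Rad -> S sigma ->
      `|phi t x sigma| <= M * expR (- lam * t) * `|x| ].

Definition class_Kinf (R : realType) (beta : R -> R) : Prop :=
  [/\ {within `[0, +oo[, continuous beta},
      forall r s, 0 <= r -> r < s -> beta r < beta s,
      beta 0 = 0,
      forall r, 0 <= r -> 0 <= beta r &
      forall M, exists2 r, 0 <= r & M < beta r].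

Definition limsup_ratio_finite (R : realType) (beta : R -> R) : Prop :=
  exists C delta : R, 0 < delta /\ forall r, 0 < r < delta -> beta r / r <= C.

Definition nondecr_nonneg (R : realType) (k : R -> R) : Prop :=
  (forall r, 0 <= r -> 0 <= k r) /\
  (forall r s, 0 <= r -> r <= s -> k r <= k s).

Definition Lp_bound (R : realType) (X : normedModType R) (Q : Type)
  (phi : R -> X -> (R -> Q) -> X) (p : R) (k : R -> R) (x : X) (sigma : R -> Q)
  : Prop :=
  (\int[lebesgue_measure]_(t in `[0%R, +oo[) ((`|phi t x sigma| `^ p)%:E)
     <= ((k `|x|) `^ p * `|x| `^ p)%:E)%E.

(* Main.v *)
Require Import Defs.
From HB Require Import structures.
From mathcomp Require Import all_boot all_order all_algebra.
From mathcomp Require Import all_classical all_reals all_analysis.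
From mathcomp Require Import measurable_realfun exponential_distribution.
From mathcomp Require Import ring lra.
Import Order.TTheory GRing.Theory Num.Theory.
Import numFieldNormedType.Exports.
Local Open Scope classical_set_scope.
Local Open Scope ring_scope.

Lemma normf_cont (R : realType) (X : normedModType R) (f : R -> X) (A : set R) :
  {within A, continuous f} -> {within A, continuous (fun t => `|f t|)}.
Proof.
move=> cf t; apply: continuous_comp; first exact: cf.
exact: norm_continuous.
Qed.

Lemma meas_phi (R : realType) (X : normedModType R) (f : R -> X) (p : R) :
  {within `[0, +oo[, continuous f} ->
  measurable_fun (`[0%R, +oo[%classic : set R) (fun t => (`|f t| `^ p)%:E).
Proof.
move=> cf; apply/measurable_EFinP.
apply: (@measurableT_comp _ _ _ _ _ _ (@powR R ^~ p)); first exact: measurable_powR.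
apply: subspace_continuous_measurable_fun => //.
exact: normf_cont.
Qed.
Lemma L1 (R : realType) (X : normedModType R) (f : R -> X) (p c a L : R) :
  0 < p -> 0 <= a -> 0 < L -> 0 <= c ->
  {within `[0, +oo[, continuous f} ->
  (\int[lebesgue_measure]_(t in `[0%R, +oo[) ((`|f t| `^ p)%:E) <= (c `^ p)%:E)%E ->
  exists2 s, a <= s <= a + L & `|f s| <= c * L `^ (- p^-1).
Proof.
move=> p0 a0 L0 c0 cf H.
have aL : a <= a + L by rewrite lerDl ltW.
have sub : `[a, a + L] `<=` `[0%R, +oo[.
  by move=> t; rewrite /= !in_itv /= andbT => /andP[h _]; rewrite (le_trans a0 h).
have cf' : {within `[a, a+L], continuous (fun t => `|f t|)}.
  by apply: (continuous_subspaceW sub); apply: normf_cont.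
have [s sin smin] := EVT_min aL cf'.
exists s; first by move: sin; rewrite in_itv.
set g := `|f s|.
have key : ((g `^ p * L)%:E <= (c `^ p)%:E)%E.
  apply: le_trans H.
  have -> : ((g `^ p * L)%:E = \int[lebesgue_measure]_(t in `[a, (a+L)%R]) (cst (g `^ p)%:E) t)%E.
    rewrite integral_cst //= lebesgue_measure_itv /= lte_fin ltrDl L0 -EFinD -EFinM.
    by rewrite addrAC subrr add0r.
  have f0 : forall t, `[0%R, +oo[%classic t -> (0 <= (`|f t| `^ p)%:E)%E.
    by move=> t _; rewrite lee_fin powR_ge0.
  apply: (le_trans _ (ge0_subset_integral lebesgue_measure _ _ (@meas_phi _ _ f p cf) f0 sub)) => //.
  apply: ge0_le_integral => //.

  - by move=> t _; rewrite lee_fin powR_ge0.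
  - exact: measurable_funS (@meas_phi _ _ f p cf).
  - move=> t tin; rewrite lee_fin; apply: ge0_ler_powR;
      [exact: ltW|by rewrite ?nnegrE ?normr_ge0|by rewrite ?nnegrE ?normr_ge0|exact: (smin t tin)].
have gp : g `^ p <= c `^ p / L by rewrite ler_pdivlMr // -lee_fin.
have -> : g = (g `^ p) `^ (p^-1) by rewrite -powRrM divff ?gt_eqF // powRr1 // /g.
apply: le_trans (ge0_ler_powR _ _ _ gp) _.
- by rewrite invr_ge0 ltW.
- by rewrite nnegrE powR_ge0.
- by rewrite nnegrE divr_ge0 ?powR_ge0 ?(ltW L0).
rewrite powRM; [|exact: powR_ge0|by rewrite invr_ge0 (ltW L0)].
rewrite -powRrM divff ?gt_eqF // powRr1 //.
by rewrite -powR_inv1 ?(ltW L0) // -powRrM mulN1r.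
Qed.

Lemma itv0P (R : realType) (t : R) : `[0%R, +oo[%classic t -> 0 <= t.
Proof. by rewrite /= in_itv /= andbT. Qed.

Lemma int_cexp (R : realType) (c : R) : 0 < c ->
  (\int[lebesgue_measure]_(t in `[0%R, +oo[) (c * expR (- c * t))%:E = 1)%E.
Proof.
move=> c0; rewrite -(integral_exponential_pdf c0) integral_mkcond.
by apply: eq_integral => x _; rewrite /exponential_pdf /patch /=; case: ifP.
Qed.

Lemma meas_cexp (R : realType) (A c : R) :
  measurable_fun (`[0%R, +oo[%classic : set R) (fun t => (A * (c * expR (- c * t)))%:E).
Proof.
apply/measurable_EFinP; apply: measurable_funTS.
apply: measurable_funM => //; apply: measurable_funM => //.
apply: (@measurableT_comp _ _ _ _ _ _ expR); first exact: measurable_expR.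
exact: measurable_funM.
Qed.

Lemma part12 (R : realType) (X : normedModType R) (Q : Type)
  (S : set (R -> Q)) (phi : R -> X -> (R -> Q) -> X) :
  (forall x sigma, S sigma -> {within `[0, +oo[, continuous (fun t => phi t x sigma)}) ->
  ULES S phi ->
  forall p : R, 0 < p -> exists (k : R -> R) (Rad : R),
    [/\ nondecr_nonneg k, 0 < Rad &
        forall x sigma, `|x| <= Rad -> S sigma -> Lp_bound phi p k x sigma].
Proof.
move=> cont [Rad [M [lam [R0 M0 l0 HU]]]] p p0.
set c := lam * p.
have c0 : 0 < c by rewrite mulr_gt0.
set K := M * c `^ (- p^-1).
have K0 : 0 <= K by rewrite mulr_ge0 ?powR_ge0 ?ltW.
exists (fun=> K), Rad; split; [|exact: R0|].
  by split; [move=> r _ | move=> r s _ _].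
move=> x sigma xR Ss; rewrite /Lp_bound.
set A := (M `^ p * `|x| `^ p) / c.
have Hle : (\int[lebesgue_measure]_(t in `[0%R, +oo[) (`|phi t x sigma| `^ p)%:E <=
   \int[lebesgue_measure]_(t in `[0%R, +oo[) (A * (c * expR (- c * t)))%:E)%E.
  apply: ge0_le_integral => //.
  - exact: (@meas_phi _ _ _ p (cont x sigma Ss)).
  - exact: meas_cexp.
  move=> t /itv0P t0.
  rewrite lee_fin; apply: le_trans (ge0_ler_powR (ltW p0) _ _ (HU t x sigma t0 xR Ss)) _.
  + by rewrite nnegrE.
  + by rewrite nnegrE mulr_ge0 ?mulr_ge0 ?expR_ge0 ?(ltW M0).
  rewrite powRM ?mulr_ge0 ?expR_ge0 ?(ltW M0) // powRM ?expR_ge0 ?(ltW M0) //.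
  rewrite -expRM /A /c.
  have -> : - (lam * p) * t = - lam * t * p by ring.
  rewrite mulrA divfK ?gt_eqF // -/c.
  by rewrite mulrAC.
apply: le_trans Hle _.
under eq_integral do rewrite EFinM.
rewrite ge0_integralZl_EFin //.
- rewrite int_cexp // mule1 lee_fin /A /K.
  rewrite powRM ?powR_ge0 ?(ltW M0) // -powRrM mulNr mulVf ?gt_eqF //.
  by rewrite powR_inv1 ?(ltW c0) // mulrAC.
- by move=> t /itv0P t0; rewrite lee_fin mulr_ge0 ?expR_ge0 ?(ltW c0).
- apply/measurable_EFinP; apply: measurable_funTS.
  apply: measurable_funM => //.
  apply: (@measurableT_comp _ _ _ _ _ _ expR); first exact: measurable_expR.
  exact: measurable_funM.
- by rewrite /A divr_ge0 ?mulr_ge0 ?powR_ge0 // ltW.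
Qed.

Lemma part31 (R : realType) (X : normedModType R) (Q : Type)
  (S : set (R -> Q)) (phi : R -> X -> (R -> Q) -> X)
  (t1 G0 : R) (beta : R -> R) :
  shift_closed S -> fc_dynamical_system S phi ->
  0 < t1 -> 0 < G0 ->
  class_Kinf beta -> limsup_ratio_finite beta ->
  (forall t x sigma, 0 <= t <= t1 -> S sigma ->
     `|phi t x sigma| <= G0 * beta `|x|) ->
  (exists (p : R) (k : R -> R) (Rad : R),
           [/\ 0 < p, nondecr_nonneg k, 0 < Rad &
               forall x sigma, `|x| <= Rad -> S sigma -> Lp_bound phi p k x sigma]) ->
  ULES S phi.
Proof.
move=> Ssh [phi0 _ cont sg] t10 G00 [_ binc b0 _ _] [C [del [del0 hC]]] hG
  [p [k [R0 [p0 [k0 kmon] R00 hb]]]].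
set Cp := `|C| + 1.
have Cp0 : 0 < Cp by rewrite /Cp; have := normr_ge0 C; lra.
have hbeta : forall r, 0 <= r -> r < del -> beta r <= Cp * r.
  move=> r; rewrite le_eqVlt => /orP[/eqP <-|rpos] rd; first by rewrite b0 mulr0.
  have := hC r; rewrite rpos rd => /(_ isT); rewrite ler_pdivrMr // => h.
  apply: le_trans h _; rewrite ler_wpM2r ?ltW // /Cp; have := ler_norm C; lra.
have bmono : forall r s, 0 <= r -> r <= s -> beta r <= beta s.
  move=> r s r0; rewrite le_eqVlt => /orP[/eqP->|rs]; first exact: lexx.
  exact/ltW/binc.
have sgS : forall t s x sigma, 0 <= s <= t -> S sigma ->
    phi t x sigma = phi (t - s) (phi s x sigma) (tshift s sigma).
  move=> t s x sigma /andP[s0 st] Ss; rewrite sg // ?subr_ge0 //.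
  by rewrite addrC subrK.
set K1 := k R0.
have K10 : 0 <= K1 by apply: k0; exact: ltW.
have Lstep : forall x sigma a L, `|x| <= R0 -> S sigma -> 0 <= a -> 0 < L ->
   exists2 s, a <= s <= a + L & `|phi s x sigma| <= K1 * `|x| * L `^ (- p^-1).
  move=> x sigma a L xR Ss a0 L0.
  have := hb x sigma xR Ss; rewrite /Lp_bound -powRM ?k0 // => H.
  have [s sin hs] := @L1 _ _ _ p _ a L p0 a0 L0
    (mulr_ge0 (k0 _ (normr_ge0 _)) (normr_ge0 _)) (cont x sigma Ss) H.
  exists s => //; apply: le_trans hs _; rewrite ler_wpM2r ?powR_ge0 //.
  by apply: ler_wpM2r => //; apply: kmon.
set D := t1 `^ (- p^-1).
have D0 : 0 <= D by exact: powR_ge0.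
set E := 1 + K1 * D.
have E1 : 1 <= E by rewrite /E lerDl mulr_ge0.
have E0 : 0 < E by apply: lt_le_trans E1.
set K := G0 * Cp * E + 1.
have GC0 : 0 <= G0 * Cp by rewrite mulr_ge0 ?ltW.
have K1' : 1 <= K by rewrite /K lerDr mulr_ge0 // ltW.
have K0 : 0 < K by apply: lt_le_trans K1'.
set r0 := Order.min R0 (del / 2 / E).
have r0R : r0 <= R0 by rewrite /r0 ge_min lexx.
have r0E : r0 * E <= del / 2 by rewrite -ler_pdivlMr // /r0 ge_min lexx orbT.
have r00 : 0 < r0 by rewrite /r0 lt_min R00 /= !divr_gt0.
have U : forall x sigma t, `|x| <= r0 -> S sigma -> 0 <= t ->
    `|phi t x sigma| <= K * `|x|.
  move=> x sigma t xr Ss t0.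
  have xR : `|x| <= R0 by apply: le_trans r0R.
  have nx0 := normr_ge0 x.
  have xE : `|x| * E <= del / 2 by apply: le_trans r0E; rewrite ler_wpM2r // ltW.
  have xd : `|x| < del.
    have : `|x| <= `|x| * E by rewrite ler_peMr.
    lra.
  have GCx : 0 <= G0 * Cp * `|x| by rewrite mulr_ge0.
  case: (lerP t t1) => tt1.
    apply: le_trans (hG t x sigma _ Ss) _; first by rewrite t0 tt1.
    apply: le_trans (_ : G0 * (Cp * `|x|) <= _).
      by apply: ler_wpM2l; [exact: ltW | exact: hbeta].
    rewrite /K mulrA; nra.
  have tt0 : 0 <= t - t1 by lra.
  have [s /andP[s1 s2] hs] := Lstep x sigma (t - t1) t1 xR Ss tt0 t10.
  rewrite subrK in s2.
  have s0 : 0 <= s by lra.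
  rewrite (sgS t s x sigma) ?s0 ?s2 //.
  apply: le_trans (hG (t - s) _ _ _ (Ssh _ _ Ss s0)) _; first by apply/andP; split; lra.
  have hs' : `|phi s x sigma| <= K1 * D * `|x| by rewrite mulrAC.
  have KDx : K1 * D * `|x| < del.
    have : K1 * D * `|x| <= E * `|x| by rewrite ler_wpM2r // /E lerDr.
    rewrite mulrC in xE; lra.
  apply: le_trans (_ : G0 * (Cp * (K1 * D * `|x|)) <= _).
    apply: ler_wpM2l; first exact: ltW.
    apply: le_trans (bmono _ _ (normr_ge0 _) hs') _.
    apply: hbeta => //; rewrite !mulr_ge0 //.
  have KDx0 : 0 <= K1 * D * `|x| by rewrite !mulr_ge0.
  rewrite /K /E; nra.
set r1 := r0 / K.
have r10 : 0 < r1 by rewrite divr_gt0.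
have r1r0 : forall x : X, `|x| <= r1 -> `|x| <= r0 /\ K * `|x| <= r0.
  move=> x; rewrite /r1 ler_pdivlMr // => h; have := normr_ge0 x; split; nra.
set B := K * (K1 + 1) * expR 1.
have B0 : 0 < B by rewrite /B !mulr_gt0 ?expR_gt0 //; lra.
set T := B `^ p.
have T0 : 0 < T by rewrite powR_gt0.
have TD : T `^ (- p^-1) = B^-1.
  by rewrite /T -powRrM mulrN divff ?gt_eqF // powR_inv1 // ltW.
have Half : forall x sigma, `|x| <= r1 -> S sigma ->
    `|phi T x sigma| <= expR (-1) * `|x|.
  move=> x sigma xr Ss; have [xr0 Kxr0] := r1r0 x xr.
  have xR : `|x| <= R0 by apply: le_trans r0R.
  have [s /andP[s1 s2] hs] := Lstep x sigma 0 T xR Ss (lexx 0) T0.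
  rewrite add0r in s2; rewrite TD in hs.
  rewrite (sgS T s x sigma) ?s1 ?s2 //.
  have ps : `|phi s x sigma| <= r0 by apply: le_trans (U x sigma s xr0 Ss s1) _.
  apply: le_trans (U _ _ (T - s) ps (Ssh _ _ Ss s1) _) _; first by rewrite subr_ge0.
  apply: le_trans (ler_wpM2l (ltW K0) hs) _.
  have -> : K * (K1 * `|x| * B^-1) = K1 / (K1 + 1) * (expR 1)^-1 * `|x|.
    rewrite /B; field.
    have e0 : expR 1 != 0 :> R by rewrite gt_eqF ?expR_gt0.
    have k1 : K1 + 1 != 0 by rewrite gt_eqF //; lra.
    have k0' : K != 0 by rewrite gt_eqF.
    by rewrite e0 k1 k0'.
  have -> : expR (-1) = (expR 1)^-1 :> R by rewrite -expRN.
  apply: ler_wpM2r => //; rewrite -[leRHS]mul1r.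
  apply: ler_wpM2r; first by rewrite invr_ge0 expR_ge0.
  by rewrite ler_pdivrMr ?mul1r; lra.
have Base : forall x sigma t, `|x| <= r1 -> S sigma -> 0 <= t -> t < T ->
    `|phi t x sigma| <= K * expR 1 * expR (- (t / T)) * `|x|.
  move=> x sigma t xr Ss t0 tT; have [xr0 _] := r1r0 x xr.
  apply: le_trans (U x sigma t xr0 Ss t0) _.
  apply: ler_wpM2r => //; rewrite -mulrA -expRD.
  rewrite -[leLHS]mulr1; apply: ler_wpM2l; first exact: ltW.
  apply: le_trans (expR_ge1Dx _).
  have : t / T < 1 by rewrite ltr_pdivrMr // mul1r.
  lra.
have e1 : expR (-1) <= 1 :> R by rewrite -[leRHS]expR0 ler_expR; lra.
have Ind : forall n x sigma t, `|x| <= r1 -> S sigma -> 0 <= t -> t < n.+1%:R * T ->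
    `|phi t x sigma| <= K * expR 1 * expR (- (t / T)) * `|x|.
  elim=> [|n IH] x sigma t xr Ss t0 tlt.
    by apply: Base => //; rewrite mul1r in tlt.
  case: (ltrP t T) => tT; first exact: Base.
  set y := phi T x sigma.
  have hy : `|y| <= expR (-1) * `|x| := Half x sigma xr Ss.
  have yr : `|y| <= r1.
    have := normr_ge0 x; have := expR_ge0 (-1 : R); nra.
  rewrite (sgS t T x sigma) ?(ltW T0) ?tT //.
  apply: le_trans (IH y _ (t - T) yr (Ssh _ _ Ss (ltW T0)) _ _) _.
  - by rewrite subr_ge0.
  - move: tlt; rewrite -addn1 natrD mulrDl mul1r; lra.
  apply: le_trans (ler_wpM2l _ hy) _.
    by rewrite !mulr_ge0 ?expR_ge0 // ltW.
  rewrite mulrA -[K * expR 1 * expR (- ((t - T) / T)) * expR (-1)]mulrA -expRD.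
  have -> : - ((t - T) / T) + -1 = - (t / T) by field; rewrite gt_eqF.
  exact: lexx.
exists r1, (K * expR 1), T^-1; split => //.
- by rewrite mulr_gt0 ?expR_gt0.
- by rewrite invr_gt0.
move=> t x sigma t0 xr Ss.
have [n hn] : exists n : nat, t / T < n%:R.
  by exists (Num.bound (t / T)); apply: archi_boundP; rewrite divr_ge0 // ltW.
apply: le_trans (Ind n x sigma t xr Ss t0 _) _.
  move: hn; rewrite ltr_pdivrMr // => h; apply: lt_le_trans h _.
  by apply: ler_wpM2r; [exact: ltW | rewrite ler_nat].
have -> : - T^-1 * t = - (t / T) by rewrite mulNr mulrC.
exact: lexx.
Qed.

Theorem theorem1 (R : realType) (X : completeNormedModType R) (Q : Type)
  (S : set (R -> Q)) (phi : R -> X -> (R -> Q) -> X)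
  (t1 G0 : R) (beta : R -> R) :
  inhabited Q ->
  shift_closed S -> concat_closed S ->
  fc_dynamical_system S phi ->
  0 < t1 -> 0 < G0 ->
  class_Kinf beta -> limsup_ratio_finite beta ->
  (forall t x sigma, 0 <= t <= t1 -> S sigma ->
     `|phi t x sigma| <= G0 * beta `|x|) ->
  [/\ (ULES S phi ->
         forall p : R, 0 < p -> exists (k : R -> R) (Rad : R),
           [/\ nondecr_nonneg k, 0 < Rad &
               forall x sigma, `|x| <= Rad -> S sigma -> Lp_bound phi p k x sigma]),
      ((forall p : R, 0 < p -> exists (k : R -> R) (Rad : R),
           [/\ nondecr_nonneg k, 0 < Rad &
               forall x sigma, `|x| <= Rad -> S sigma -> Lp_bound phi p k x sigma]) ->
         exists (p : R) (k : R -> R) (Rad : R),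
           [/\ 0 < p, nondecr_nonneg k, 0 < Rad &
               forall x sigma, `|x| <= Rad -> S sigma -> Lp_bound phi p k x sigma]) &
      ((exists (p : R) (k : R -> R) (Rad : R),
           [/\ 0 < p, nondecr_nonneg k, 0 < Rad &
               forall x sigma, `|x| <= Rad -> S sigma -> Lp_bound phi p k x sigma]) ->
         ULES S phi)].
Proof.
move=> _ Ssh _ fc t10 G00 hb hl hG; have [_ _ cont _] := fc.
split.
- exact: (@part12 R X Q S phi cont).
- move=> H; have [k [Rad [h1 h2 h3]]] := H 1 ltr01.
  by exists 1, k, Rad; split.
- exact: (@part31 R X Q S phi t1 G0 beta Ssh fc t10 G00 hb hl hG).
Qed.
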